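(* Let $H=(V,E)$ be a hypergraph. Then: (1) $H$ has an Euler family if and only if each block of $H$ has an Euler family. (2) $H$ has an Euler tour if and only if each block $B$ of $H$ has an Euler tour that traverses (as an anchor) every separating vertex of $H$ contained in $B$.
   Context: A hypergraph $H=(V,E)$ consists of a finite nonempty vertex set $V$, a finite edge set $E$ disjoint from $V$, and an incidence function assigning to each edge $e\in E$ a subset of $V$ (also denoted $e$); distinct edges may have the same vertex set. Hypergraphs are assumed to have no empty edges. A hypersubgraph of $H$ is a hypergraph $(V',E')$ with $V'\subseteq V$, $E'\subseteq E$ (each $e\in E'$ contained in $V'$). $H$ decomposes into hypersubgraphs $H_1,H_2$ if $E$ is the disjoint union of $E(H_1)$ and $E(H_2)$. A walk is a sequence $W=v_0e_1v_1e_2\cdots e_kv_k$ with $v_i\in V$, $e_i\in E$, such that for each $i$, $v_{i-1}\ne v_i$ and $v_{i-1},v_i\in e_i$; the $v_i$ are its anchors. $W$ is closed if $k\ge 2$ and $v_0=v_k$; it is a strict trail if $e_1,\dots,e_k$ are pairwise distinct. A hypergraph is connected if any two distinct vertices are joined by a walk. An Euler tour is a closed strict trail traversing every edge; an Euler family is a family of closed strict trails such that every edge lies in exactly one trail and no two trails have a common anchor. In a connected hypergraph $H$, a vertex $v$ is a separating vertex if $H$ decomposes into two connected hypersubgraphs $H_1,H_2$, each with at least one edge, with $V(H_1)\cap V(H_2)=\{v\}$; for general $H$, separating vertices are those of its connected components. A hypergraph is non-separable if it is connected, has no empty edges, and has no separating vertex; a block of $H$ is a maximal non-separable hypersubgraph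 of $H$.
   Formalization: Part (2), on Euler tours, is asserted only for connected H, while part (1) is kept for arbitrary H. Apart from conventions, each condition added here is assumed in the paper as well or is needed for the statement above to hold. *)

(* Defs.v *)
From mathcomp Require Import all_boot.
Set Implicit Arguments. Unset Strict Implicit. Unset Printing Implicit Defensive.

(* Hypersubgraphs (and the
   hypergraph itself, with VS = setT, ES = setT) are described by a pair
   (VS, ES) of a vertex set and an edge set. *)

Section Hyp.
Variables (V E : finType) (inc : E -> {set V}).

Definition subhyp (VH : {set V}) (EH : {set E}) (VS : {set V}) (ES : {set E}) : Prop :=
  [/\ VS \subset VH, ES \subset EH, VS != set0 &
      forall e, e \in ES -> inc e \subset VS].

(* A walk v0 e1 v1 ... ek vk is represented as (v0, [:: (e1,v1); ...; (ek,vk)]). *)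
Definition walk := (V * seq (E * V))%type.

Definition anchors (w : walk) : seq V := w.1 :: map snd w.2.
Definition wedges (w : walk) : seq E := map fst w.2.
Definition wlast (w : walk) : V := last w.1 (map snd w.2).

Fixpoint walk_from (VS : {set V}) (ES : {set E}) (u : V) (s : seq (E * V)) : bool :=
  match s with
  | [::] => true
  | (e, v) :: s' =>
      [&& u != v, u \in inc e, v \in inc e, e \in ES, v \in VS & walk_from VS ES v s']
  end.

Definition is_walk (VS : {set V}) (ES : {set E}) (w : walk) : Prop :=
  w.1 \in VS /\ walk_from VS ES w.1 w.2.

Definition closed_walk (w : walk) : Prop := 2 <= size w.2 /\ wlast w = w.1.

Definition strict_trail (w : walk) : Prop := uniq (wedges w).

Definition closed_strict_trail (VS : {set V}) (ES : {set E}) (w : walk) : Prop :=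
  [/\ is_walk VS ES w, closed_walk w & strict_trail w].

Definition euler_tour (VS : {set V}) (ES : {set E}) (w : walk) : Prop :=
  closed_strict_trail VS ES w /\ forall e, e \in ES -> e \in wedges w.

Definition euler_family (VS : {set V}) (ES : {set E}) (F : seq walk) : Prop :=
  [/\ (forall w, w \in F -> closed_strict_trail VS ES w),
      (forall e, e \in ES -> count (fun w => e \in wedges w) F = 1) &
      pairwise (fun w1 w2 => ~~ has (fun x => x \in anchors w2) (anchors w1)) F].

Definition has_euler_tour VS ES : Prop := exists w, euler_tour VS ES w.
Definition has_euler_family VS ES : Prop := exists F, euler_family VS ES F.

Definition joined (VS : {set V}) (ES : {set E}) (u x : V) : Prop :=
  exists s, is_walk VS ES (u, s) /\ wlast (u, s) = x.

Definition connected (VS : {set V}) (ES : {set E}) : Prop :=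
  forall u x, u \in VS -> x \in VS -> u != x -> joined VS ES u x.

Definition separating_conn (VS : {set V}) (ES : {set E}) (v : V) : Prop :=
  exists (V1 V2 : {set V}) (E1 E2 : {set E}),
    [/\ subhyp VS ES V1 E1 /\ subhyp VS ES V2 E2,
        E1 :&: E2 = set0 /\ E1 :|: E2 = ES,
        E1 != set0 /\ E2 != set0,
        V1 :&: V2 = [set v] &
        connected V1 E1 /\ connected V2 E2].

(* Separating vertex of a general hypergraph: separating vertex of the
   connected component containing it. *)
Definition separating (VS : {set V}) (ES : {set E}) (v : V) : Prop :=
  v \in VS /\
  exists C : {set V},
    (forall x, x \in C <-> (x \in VS /\ (x = v \/ joined VS ES v x))) /\
    separating_conn C [set e in ES | inc e \subset C] v.

Definition nonseparable (VS : {set V}) (ES : {set E}) : Prop :=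
  [/\ connected VS ES,
      (forall e, e \in ES -> inc e != set0) &
      forall v, ~ separating_conn VS ES v].

Definition block (VS : {set V}) (ES : {set E}) (VB : {set V}) (EB : {set E}) : Prop :=
  [/\ subhyp VS ES VB EB, nonseparable VB EB &
      forall (V' : {set V}) (E' : {set E}), subhyp VS ES V' E' -> nonseparable V' E' ->
        VB \subset V' -> EB \subset E' -> V' = VB /\ E' = EB].

End Hyp.

(* Main.v *)
Require Import Defs.
From mathcomp Require Import all_boot.
From Stdlib Require Import Classical ClassicalEpsilon.
Set Implicit Arguments. Unset Strict Implicit. Unset Printing Implicit Defensive.

Section Main.
Variables (V E : finType) (inc : E -> {set V}).
Hypothesis Hnoempty : forall e, inc e != set0.

Local Notation wf := (walk_from inc).
Implicit Types (VS W VB : {set V}) (ES S EB : {set E}) (u x y z q v : V) (e f g h : E) (s : seq (E * V)).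

Lemma wf_cat VS ES u s1 s2 :
  wf VS ES u (s1 ++ s2) = wf VS ES u s1 && wf VS ES (last u (map snd s1)) s2.
Proof.
elim: s1 u => [|[e v] s1 IH] u //=.
by rewrite IH !andbA.
Qed.

Lemma wf_sub VS ES (VS' : {set V}) (ES' : {set E}) u s :
  VS \subset VS' -> ES \subset ES' -> wf VS ES u s -> wf VS' ES' u s.
Proof.
move=> sV sE; elim: s u => [|[e v] s IH] u //=.
case/and5P=> -> -> -> /(subsetP sE) -> /andP [/(subsetP sV) -> /IH ->].
by [].
Qed.

Definition wreach VS ES u x := exists s, wf VS ES u s /\ last u (map snd s) = x.

Lemma wreach_refl VS ES u : wreach VS ES u u.
Proof. by exists [::]. Qed.

Lemma wreach_trans VS ES u x y : wreach VS ES u x -> wreach VS ES x y -> wreach VS ES u y.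
Proof.
move=> [s1 [w1 l1]] [s2 [w2 l2]]; exists (s1 ++ s2); split.
  by rewrite wf_cat w1 l1 w2.
by rewrite map_cat last_cat l1.
Qed.

Lemma wreach_step VS ES e u x :
  e \in ES -> u \in inc e -> x \in inc e -> x \in VS -> wreach VS ES u x.
Proof.
move=> eE ue xe xV; case: (eqVneq u x) => [->|ux]; first exact: wreach_refl.
by exists [:: (e, x)]; rewrite /= ux ue xe eE xV.
Qed.

Lemma wreach_sub VS ES (VS' : {set V}) (ES' : {set E}) u x :
  VS \subset VS' -> ES \subset ES' -> wreach VS ES u x -> wreach VS' ES' u x.
Proof. by move=> sV sE [s [w l]]; exists s; split => //; apply: wf_sub w. Qed.

Lemma wreach_sym VS ES u x : u \in VS -> wreach VS ES u x -> wreach VS ES x u.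
Proof.
move=> uV [s [w <-]]; elim: s u uV w => [|[e v] s IH] u uV /=.
  by move=> _; exact: wreach_refl.
case/and5P=> uv ue ve eE /andP [vV w].
apply: wreach_trans (IH v vV w) _.
exact: wreach_step ve ue uV.
Qed.

Lemma connectedP VS ES :
  (forall u x, u \in VS -> x \in VS -> wreach VS ES u x) -> connected inc VS ES.
Proof.
move=> H u x uV xV _; have [s [w l]] := H u x uV xV.
by exists s; split.
Qed.

Lemma connectedW VS ES u x : connected inc VS ES -> u \in VS -> x \in VS -> wreach VS ES u x.
Proof.
move=> C uV xV; case: (eqVneq u x) => [->|ux]; first exact: wreach_refl.
by have [s [[_ w] l]] := C u x uV xV ux; exists s.
Qed.

Lemma wreach_walk_edges VS ES u s q e :
  (forall e, e \in ES -> inc e \subset VS) ->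
  wf VS ES u s -> e \in map fst s -> q \in inc e -> wreach VS ES u q.
Proof.
move=> EV; elim: s u => [|[e' v] s IH] u //=.
case/and5P=> uv ue ve eE /andP [vV w]; rewrite inE => /orP [/eqP ->|es] qe.
  by apply: (wreach_step eE ue qe); exact: (subsetP (EV _ eE)).
apply: wreach_trans (IH v w es qe).
exact: wreach_step ue ve vV.
Qed.


Definition rz ES z : rel E := fun e f =>
  [&& e \in ES, f \in ES & [exists x, [&& x != z, x \in inc e & x \in inc f]]].
Definition linked ES z := forall e f, e \in ES -> f \in ES -> connect (rz ES z) e f.

Lemma rzI ES z e f x : e \in ES -> f \in ES -> x != z -> x \in inc e -> x \in inc f ->
  rz ES z e f.
Proof. by move=> eE fE xz xe xf; rewrite /rz eE fE /=; apply/existsP; exists x; rewrite xz xe xf. Qed.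

Lemma rzP ES z e f : rz ES z e f ->
  [/\ e \in ES, f \in ES & exists x, [/\ x != z, x \in inc e & x \in inc f]].
Proof.
case/and3P=> eE fE /existsP [x /and3P [xz xe xf]]; split => //; by exists x.
Qed.

Lemma rz_sym ES z : symmetric (rz ES z).
Proof.
move=> e f; apply/idP/idP => /rzP [eE fE [x [xz xe xf]]]; exact: (rzI _ _ xz).
Qed.

Lemma connect_rz_sym ES z e f : connect (rz ES z) e f = connect (rz ES z) f e.
Proof. exact: (sym_connect_sym (rz_sym ES z)). Qed.

Lemma connect_rz_sub ES (ES' : {set E}) z e f : ES \subset ES' ->
  connect (rz ES z) e f -> connect (rz ES' z) e f.
Proof.
move=> sE; apply: connect_sub => a b /rzP [aE bE [x [xz xa xb]]].
apply: connect1; apply: (rzI _ _ xz) => //; exact: (subsetP sE).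
Qed.

Lemma closed_connect (S ES : {set E}) z a b :
  (forall a b, a \in S -> rz ES z a b -> b \in S) -> a \in S -> connect (rz ES z) a b -> b \in S.
Proof.
move=> cl aS /connectP [p pp ->]; elim: p a aS pp => [|c p IH] a aS //=.
by case/andP=> r pp; apply: (IH c (cl _ _ aS r) pp).
Qed.

Lemma chain W S ES z p g x y :
  (forall a b, a \in S -> rz ES z a b -> b \in S) ->
  (forall a, a \in S -> inc a \subset W) ->
  path (rz ES z) g p -> g \in S -> x \in inc g -> y \in inc (last g p) -> wreach W S x y.
Proof.
move=> cl SW; elim: p g x => [|g' p IH] g x /=.
  move=> _ gS xg yg; exact: (wreach_step gS xg yg (subsetP (SW g gS) y yg)).
case/andP=> r pp gS xg yl.
case/rzP: (r) => _ _ [s [_ sg sg']].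
have g'S := cl _ _ gS r.
apply: wreach_trans (IH g' s pp g'S sg' yl).
exact: (wreach_step gS xg sg (subsetP (SW g gS) s sg)).
Qed.

Lemma chainc W S ES z g h x y :
  (forall a b, a \in S -> rz ES z a b -> b \in S) ->
  (forall a, a \in S -> inc a \subset W) ->
  connect (rz ES z) g h -> g \in S -> x \in inc g -> y \in inc h -> wreach W S x y.
Proof. move=> cl SW /connectP [p pp ->] gS xg yl; exact: (chain cl SW pp gS xg yl). Qed.

Lemma boundary VS ES S u s g0 h0 :
  wf VS ES u s -> g0 \in S -> u \in inc g0 -> h0 \in ES -> h0 \notin S ->
  last u (map snd s) \in inc h0 ->
  exists x g h, [/\ g \in S, h \in ES, h \notin S, x \in inc g & x \in inc h].
Proof.
elim: s u g0 => [|[e v] s IH] u g0 /=.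
  by move=> _ g0S ug0 h0E h0S uh0; exists u, g0, h0.
case/and5P=> uv ue ve eE /andP [vV w] g0S ug0 h0E h0S l.
case: (boolP (e \in S)) => eS.
  exact: (IH v e w eS ve h0E h0S l).
by exists u, g0, e.
Qed.

Lemma sep_notlinked VS ES z : separating_conn inc VS ES z -> ~ linked ES z.
Proof.
move=> [V1 [V2 [E1 [E2 [[s1 s2] [i u] [n1 n2] I12 _]]]]] L.
case: s1 => _ sE1 _ EV1; case: s2 => _ sE2 _ EV2.
case/set0Pn: n1 => e0 e0E1; case/set0Pn: n2 => f0 f0E2.
have e0E : e0 \in ES by rewrite -u inE e0E1.
have f0E : f0 \in ES by rewrite -u inE f0E2 orbT.
have cl : forall a b, a \in E1 -> rz ES z a b -> b \in E1.
  move=> a b aE1 /rzP [_ bE [x [xz xa xb]]].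
  move: bE; rewrite -u inE => /orP [//|bE2].
  have : x \in V1 :&: V2 by rewrite inE (subsetP (EV1 _ aE1)) // (subsetP (EV2 _ bE2)).
  by rewrite I12 inE (negbTE xz).
have := closed_connect cl e0E1 (L e0 f0 e0E f0E).
move=> f0E1; have : f0 \in E1 :&: E2 by rewrite inE f0E1.
by rewrite i inE.
Qed.

Lemma touch VS ES z g h :
  (forall e, e \in ES -> inc e \subset VS) -> connected inc VS ES ->
  g \in ES -> h \in ES -> ~~ connect (rz ES z) g h ->
  exists g', connect (rz ES z) g g' /\ z \in inc g'.
Proof.
move=> EV C gE hE ngh.
set Sg := [set g' in ES | connect (rz ES z) g g'].
case/set0Pn: (Hnoempty g) => a ag; case/set0Pn: (Hnoempty h) => b bh.
have [s [w l]] := connectedW C (subsetP (EV g gE) a ag) (subsetP (EV h hE) b bh).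
have gSg : g \in Sg by rewrite inE gE connect0.
have hSg : h \notin Sg by rewrite inE hE /= (negbTE ngh).
have [x [g1 [h1 [g1S h1E h1S xg1 xh1]]]] :=
  boundary w gSg ag hE hSg (eq_ind_r (fun t => t \in inc h) bh l).
move: g1S; rewrite inE => /andP [g1E cgg1].
case: (eqVneq x z) => [xz|xz].
  by exists g1; split => //; rewrite -xz.
move: h1S; rewrite inE h1E /= => /negP; case.
apply: connect_trans cgg1 (connect1 _); exact: (rzI _ _ xz).
Qed.

Lemma notlinked_sep VS ES z e0 f0 :
  (forall e, e \in ES -> inc e \subset VS) -> connected inc VS ES ->
  e0 \in ES -> f0 \in ES -> ~~ connect (rz ES z) e0 f0 -> separating_conn inc VS ES z.
Proof.
move=> EV C e0E f0E ne.
pose r := rz ES z.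
pose E1 := [set g in ES | connect r e0 g].
pose E2 := ES :\: E1.
pose V1 := \bigcup_(g in E1) inc g.
pose V2 := \bigcup_(g in E2) inc g.
have e0E1 : e0 \in E1 by rewrite inE e0E connect0.
have f0E2 : f0 \in E2 by rewrite !inE f0E /= (negbTE ne).
have E1E : forall a, a \in E1 -> a \in ES by move=> a; rewrite inE => /andP [].
have E2E : forall a, a \in E2 -> a \in ES by move=> a; rewrite inE => /andP [].
have cl1 : forall a b, a \in E1 -> r a b -> b \in E1.
  move=> a b; rewrite !inE => /andP [aE ca] rab; case/rzP: (rab) => _ bE _.
  by rewrite bE (connect_trans ca (connect1 rab)).
have cl2 : forall a b, a \in E2 -> r a b -> b \in E2.
  move=> a b aE2 rab; case/rzP: (rab) => _ bE _.
  rewrite inE bE andbT; apply/negP => bE1.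
  have : a \in E1 by apply: (cl1 b a bE1); rewrite /r rz_sym.
  by move: aE2; rewrite inE => /andP [/negP].
have inV1 : forall g x, g \in E1 -> x \in inc g -> x \in V1.
  by move=> g x gE xg; apply/bigcupP; exists g.
have inV2 : forall g x, g \in E2 -> x \in inc g -> x \in V2.
  by move=> g x gE xg; apply/bigcupP; exists g.
have common : forall x g h, g \in E1 -> h \in E2 -> x \in inc g -> x \in inc h -> x = z.
  move=> x g h gE1 hE2 xg xh; apply/eqP/negPn/negP => xz.
  have : h \in E1 by apply: (cl1 g h gE1); exact: (rzI (E1E g gE1) (E2E h hE2) xz xg xh).
  by move: hE2; rewrite inE => /andP [/negP].
have touch1 : exists g', g' \in E1 /\ z \in inc g'.
  have [g' [c zg']] := touch EV C e0E f0E ne.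
  by exists g'; split => //; exact: (closed_connect cl1 e0E1 c).
have touch2 : forall g, g \in E2 -> exists g', [/\ connect r g g', g' \in E2 & z \in inc g'].
  move=> g gE2; have gE := E2E g gE2.
  have ng : ~~ connect r g e0.
    apply/negP => cge; move: gE2; rewrite !inE gE /= -/r.
    by rewrite connect_rz_sym cge.
  have [g' [c zg']] := touch EV C gE e0E ng.
  by exists g'; split => //; exact: (closed_connect cl2 gE2 c).
have SW1 : forall a, a \in E1 -> inc a \subset V1 by move=> a aE; apply/subsetP => x; apply: inV1.
have SW2 : forall a, a \in E2 -> inc a \subset V2 by move=> a aE; apply/subsetP => x; apply: inV2.
have V1S : V1 \subset VS.
  by apply/bigcupsP => g gE; apply: EV; apply: E1E.
have V2S : V2 \subset VS.
  by apply/bigcupsP => g gE; apply: EV; apply: E2E.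
exists V1, V2, E1, E2; split.
- split; split => //.
  + by apply/subsetP => a; apply: E1E.
  + by case/set0Pn: (Hnoempty e0) => x xe; apply/set0Pn; exists x; apply: inV1 xe.
  + by apply/subsetP => a; apply: E2E.
  + by case/set0Pn: (Hnoempty f0) => x xe; apply/set0Pn; exists x; apply: inV2 xe.
- split.
  + by apply/setP => a; rewrite !inE; case: (a \in ES); case: (connect r e0 a).
  + apply/setP => a; rewrite !inE; case: (boolP (a \in ES)) => aE /=.
      by case: (connect r e0 a).
    by [].

- by split; apply/set0Pn; [exists e0 | exists f0].
- apply/setP => x; rewrite !inE; apply/idP/idP.
    case/andP => /bigcupP [g gE1 xg] /bigcupP [h hE2 xh].
    by apply/eqP; apply: (common x g h).
  move/eqP => ->.
  case: touch1 => g [gE1 zg]; case: (touch2 f0 f0E2) => h [_ hE2 zh].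
  by rewrite (inV1 g) // (inV2 h).
- split; apply: connectedP.
    move=> u x /bigcupP [g gE1 ug] /bigcupP [h hE1 xh].
    apply: (chainc cl1 SW1 _ gE1 ug xh).
    move: gE1 hE1; rewrite !inE => /andP [_ c1] /andP [_ c2].
    by apply: connect_trans c2; rewrite connect_rz_sym.
  have toz : forall u, u \in V2 -> wreach V2 E2 u z.
    move=> u /bigcupP [g gE2 ug].
    have [g' [c g'E2 zg']] := touch2 g gE2.
    exact: (chainc cl2 SW2 c gE2 ug zg').
  move=> u x uV xV; apply: wreach_trans (toz u uV) _.
  by apply: wreach_sym xV (toz x xV).
Qed.

Lemma nonsep_linked VS ES z : (forall e, e \in ES -> inc e \subset VS) ->
  nonseparable inc VS ES -> linked ES z.
Proof.
move=> EV [C _ NS] e f eE fE; apply/negPn/negP => ne.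
exact: (NS z (notlinked_sep EV C eE fE ne)).
Qed.

Lemma linked_nonsep VS ES : connected inc VS ES -> (forall z, linked ES z) ->
  nonseparable inc VS ES.
Proof.
move=> C L; split => // z S.
exact: (sep_notlinked S (L z)).
Qed.


Lemma nonsep_edge e : nonseparable inc (inc e) [set e].
Proof.
apply: linked_nonsep.
  apply: connectedP => u x ue xe; exact: (wreach_step (set11 e) ue xe xe).
by move=> z a b; rewrite !inE => /eqP -> /eqP ->; exact: connect0.
Qed.

Lemma nonsep_vertex v : nonseparable inc [set v] set0.
Proof.
apply: linked_nonsep.
  by apply: connectedP => u x; rewrite !inE => /eqP -> /eqP ->; exact: wreach_refl.
by move=> z a b; rewrite inE.
Qed.

Lemma subhypT VB EB : VB != set0 -> (forall e, e \in EB -> inc e \subset VB) ->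
  subhyp inc setT setT VB EB.
Proof. by move=> n EV; split => //; apply: subsetT. Qed.

Lemma block_edges VB EB : block inc setT setT VB EB -> forall e, e \in EB -> inc e \subset VB.
Proof. by case=> [[]]. Qed.

Lemma block_exists (V0 : {set V}) (E0 : {set E}) : subhyp inc setT setT V0 E0 -> nonseparable inc V0 E0 ->
  exists VB EB, [/\ block inc setT setT VB EB, V0 \subset VB & E0 \subset EB].
Proof.
move: (leqnn (#|~: V0| + #|~: E0|)); move: {2}(#|~: V0| + #|~: E0|) => n.
elim: n V0 E0 => [|n IH] V0 E0 Hn sh ns.
  apply: Classical_Prop.NNPP => Hno; apply: Hno; exists V0, E0; split => //.
  split => // V' E' sh' ns' s1 s2.
  move: Hn; rewrite leqn0 addn_eq0 !cards_eq0 => /andP [/eqP c1 /eqP c2].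
  split; apply/eqP; rewrite eqEsubset ?s1 ?s2 andbT; apply/subsetP => x _;
    apply/negPn/negP => xn.
    have : x \in ~: V0 by rewrite inE.
    by rewrite c1 inE.
  have : x \in ~: E0 by rewrite inE.
  by rewrite c2 inE.
apply: Classical_Prop.NNPP => Hno; apply Hno; exists V0, E0; split => //.
split => // V' E' sh' ns' s1 s2.
case: (Classical_Prop.classic (V' = V0 /\ E' = E0)) => // Hne; exfalso.
have lt : #|~: V'| + #|~: E'| < #|~: V0| + #|~: E0|.
  have l1 : #|~: V'| <= #|~: V0| by apply: subset_leq_card; rewrite setCS.
  have l2 : #|~: E'| <= #|~: E0| by apply: subset_leq_card; rewrite setCS.
  case: (eqVneq V' V0) => [eV|nV].
    case: (eqVneq E' E0) => [eE|nE]; first by case: Hne.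
    rewrite eV ltn_add2l; apply: proper_card; rewrite properEneq setCS s2 andbT.
    by apply: contra nE => /eqP h; apply/eqP; rewrite -[E']setCK h setCK.
  apply: (@leq_trans (#|~: V'|.+1 + #|~: E'|)); first by rewrite addSn.
  apply: leq_add l2; apply: proper_card; rewrite properEneq setCS s1 andbT.
  by apply: contra nV => /eqP h; apply/eqP; rewrite -[V']setCK h setCK.
have [VB [EB [bB s1' s2']]] := IH V' E' (ltnSE (leq_trans lt Hn)) sh' ns'.
apply Hno; exists VB, EB; split => //; [exact: subset_trans s1 s1' | exact: subset_trans s2 s2'].
Qed.


Lemma block_of_edge e : exists VB EB, block inc setT setT VB EB /\ e \in EB.
Proof.
have sh : subhyp inc setT setT (inc e) [set e].
  by apply: subhypT => // a; rewrite inE => /eqP ->.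
have [VB [EB [bB _ s2]]] := block_exists sh (nonsep_edge e).
by exists VB, EB; split => //; apply: (subsetP s2); rewrite inE.
Qed.

Lemma block_of_vertex v : exists VB EB, block inc setT setT VB EB /\ v \in VB.
Proof.
have sh : subhyp inc setT setT [set v] set0.
  by apply: subhypT => [|a]; [apply/set0Pn; exists v; rewrite inE | rewrite inE].
have [VB [EB [bB s1 _]]] := block_exists sh (nonsep_vertex v).
by exists VB, EB; split => //; apply: (subsetP s1); rewrite inE.
Qed.

Lemma block_unique VB1 EB1 VB2 EB2 e :
  block inc setT setT VB1 EB1 -> block inc setT setT VB2 EB2 ->
  e \in EB1 -> e \in EB2 -> VB1 = VB2 /\ EB1 = EB2.
Proof.
move=> b1 b2 e1 e2.
have EV1 := block_edges b1; have EV2 := block_edges b2.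
case: (b1) => sh1 ns1 M1; case: (b2) => sh2 ns2 M2.
case: (ns1) => C1 _ _; case: (ns2) => C2 _ _.
pose VU := VB1 :|: VB2; pose EU := EB1 :|: EB2.
have EVU : forall a, a \in EU -> inc a \subset VU.
  move=> a; rewrite inE => /orP [aE|aE].
    by apply: subset_trans (EV1 a aE) (subsetUl _ _).
  by apply: subset_trans (EV2 a aE) (subsetUr _ _).
have shU : subhyp inc setT setT VU EU.
  apply: subhypT => //; case: sh1 => _ _ n _.
  by apply: contra n; rewrite -subset0 => /(subset_trans (subsetUl _ _)); rewrite subset0.
case/set0Pn: (Hnoempty e) => y ye.
have toy : forall u, u \in VU -> wreach VU EU u y.
  move=> u; rewrite inE => /orP [uV|uV].
    apply: (wreach_sub (subsetUl _ _) (subsetUl _ _)).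
    exact: (connectedW C1 uV (subsetP (EV1 e e1) y ye)).
  apply: (wreach_sub (subsetUr _ _) (subsetUr _ _)).
  exact: (connectedW C2 uV (subsetP (EV2 e e2) y ye)).
have yU : y \in VU by rewrite inE (subsetP (EV1 e e1) y ye).
have nsU : nonseparable inc VU EU.
  apply: linked_nonsep.
    apply: connectedP => u x uV xV; apply: wreach_trans (toy u uV) _.
    exact: (wreach_sym xV (toy x xV)).
  move=> z.
  have toe : forall a, a \in EU -> connect (rz EU z) a e.
    move=> a; rewrite inE => /orP [aE|aE].
      exact: (connect_rz_sub (subsetUl _ _) (nonsep_linked z EV1 ns1 aE e1)).
    exact: (connect_rz_sub (subsetUr _ _) (nonsep_linked z EV2 ns2 aE e2)).
  move=> a b aE bE; apply: connect_trans (toe a aE) _.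
  by rewrite connect_rz_sym; apply: toe.
have [h1 h2] := M1 VU EU shU nsU (subsetUl _ _) (subsetUl _ _).
have [h3 h4] := M2 VU EU shU nsU (subsetUr _ _) (subsetUr _ _).
by split; [rewrite -h1 h3 | rewrite -h2 h4].
Qed.


Lemma shorten VS ES u s : wf VS ES u s -> exists s',
  [/\ wf VS ES u s', last u (map snd s') = last u (map snd s),
      uniq (u :: map snd s') & {subset map fst s' <= map fst s}].
Proof.
elim: s u => [|[e v] s IH] u /=.
  by move=> _; exists [::].
case/and5P=> uv ue ve eE /andP [vV w].
have [s2 [w2 l2 u2 sub2]] := IH v w.
case: (boolP (u \in map snd s2)) => us2.
  pose ms := map snd s2; pose i := index u ms.
  have iS : i < size ms by rewrite index_mem.
  have ntu : nth v ms i = u by rewrite nth_index.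
  have ltk : last v (take i.+1 ms) = u by rewrite (take_nth v iS) last_rcons.
  move: w2; rewrite -[s2](cat_take_drop i.+1) wf_cat => /andP [_ w3].
  move: w3; rewrite map_take -/ms ltk => w3.
  exists (drop i.+1 s2); split => //.
  - rewrite -l2 -[in RHS](cat_take_drop i.+1 s2) map_cat last_cat map_take ltk.
    by rewrite map_drop.
  - move: u2; rewrite /= -/ms => /andP [_]; rewrite -[ms](cat_take_drop i.+1) cat_uniq.
    case/and3P=> _ hn ud; rewrite map_drop ud andbT.
    apply: contra hn => ud'; apply/hasP; exists u => //.
    by rewrite (take_nth v iS) mem_rcons inE ntu eqxx.
  - move=> a ad; rewrite inE; apply/orP; right; apply: sub2.
    by move: ad; rewrite map_drop; apply: mem_drop.
exists ((e, v) :: s2); split => //=.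
- by rewrite uv ue ve eE vV w2.
- by move: u2 => /= ->; rewrite inE negb_or uv us2.
- move=> a; rewrite !inE => /orP [->//|/sub2 ->]; by rewrite orbT.
Qed.

Lemma wf_edges VS ES (VS' : {set V}) (ES' : {set E}) u s : wf VS ES u s ->
  (forall e, e \in map fst s -> e \in ES' /\ inc e \subset VS') -> wf VS' ES' u s.
Proof.
elim: s u => [|[e v] s IH] u //=.
case/and5P=> uv ue ve eE /andP [vV w] H.
have [eE' sV] := H e (mem_head _ _).
rewrite uv ue ve eE' (subsetP sV v ve) /=; apply: IH w _ => a aS.
by apply: H; rewrite inE aS orbT.
Qed.

Lemma first_edge VS ES u s : wf VS ES u s -> last u (map snd s) != u ->
  exists e, e \in ES /\ u \in inc e.
Proof.
case: s => [|[e v] s] /=; first by rewrite eqxx.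
by case/and5P=> _ ue _ eE _ _; exists e.
Qed.

Lemma left_link VS ES (ES' : {set E}) z u s g : wf VS ES u s ->
  {subset map fst s <= ES'} -> g \in ES' -> u \in inc g ->
  forall i, i < size s -> z \notin (u :: take i (map snd s)) ->
  connect (rz ES' z) g (nth g (map fst s) i).
Proof.
elim: s u g => [|[e v] s IH] u g //=.
case/and5P=> uv ue ve eE /andP [vV w] sub gE ug i.
have eE' : e \in ES' by apply: sub; rewrite inE eqxx.
case: i => [|i] /=.
  rewrite inE => _ /negP nz; apply: connect1; apply: (rzI gE eE' _ ug ue).
  by apply/negP => /eqP uz; apply: nz; rewrite uz eqxx.
rewrite ltnS !inE negb_or => iS /andP [uz]; rewrite negb_or => /andP [vz nz].
have c1 : rz ES' z g e by apply: (rzI gE eE' _ ug ue); rewrite eq_sym.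
apply: connect_trans (connect1 c1) _.
rewrite (set_nth_default e); last by rewrite size_map.
apply: (IH v e w _ eE' ve i iS); last by rewrite inE negb_or vz nz.
by move=> a aS; apply: sub; rewrite inE aS orbT.
Qed.

Lemma right_link VS ES (ES' : {set E}) z u s g : wf VS ES u s ->
  {subset map fst s <= ES'} -> g \in ES' -> last u (map snd s) \in inc g ->
  forall i, i < size s -> z \notin drop i (map snd s) ->
  connect (rz ES' z) (nth g (map fst s) i) g.
Proof.
elim: s u g => [|[e v] s IH] u g //=.
case/and5P=> uv ue ve eE /andP [vV w] sub gE lg i.
have eE' : e \in ES' by apply: sub; rewrite inE eqxx.
have sub' : {subset map fst s <= ES'} by move=> a aS; apply: sub; rewrite inE aS orbT.
case: i => [|i] /=.
  rewrite inE negb_or => _ /andP [vz nz].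
  case: s IH w lg sub sub' nz => [|[e' v'] s] IH w lg _ sub' nz /=.
    by apply: connect1; apply: (rzI eE' gE _ ve lg); rewrite eq_sym.
  have c := IH v g w sub' gE lg 0 (ltn0Sn _) nz.
  move: w => /= /and5P [_ ve' _ _ _].
  have e'E : e' \in ES' by apply: sub'; rewrite inE eqxx.
  apply: connect_trans c; apply: connect1; apply: (rzI eE' e'E _ ve ve').
  by rewrite eq_sym.
rewrite ltnS => iS nz.
by apply: (IH v g w sub' gE lg i iS nz).
Qed.


Lemma ear VB EB x s : block inc setT setT VB EB -> wf setT setT x s -> x \in VB ->
  last x (map snd s) \in VB -> last x (map snd s) != x ->
  (forall e, e \in map fst s -> e \notin EB) -> False.
Proof.
move=> bB w xV yV yx nE.
have EV := block_edges bB; case: bB => sh ns M; case: (ns) => C _ _.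
have [s' [w' l' u' sub']] := shorten w.
have nE' : forall e, e \in map fst s' -> e \notin EB by move=> e /sub'; apply: nE.
set y := last x (map snd s) in yV yx l'.
pose PE := [set e | e \in map fst s'].
pose VB' := VB :|: \bigcup_(e in PE) inc e.
pose EB' := EB :|: PE.
have EV' : forall a, a \in EB' -> inc a \subset VB'.
  move=> a; rewrite inE => /orP [aE|aP].
    by apply: subset_trans (EV a aE) (subsetUl _ _).
  apply/subsetP => q qa; rewrite inE; apply/orP; right; apply/bigcupP; by exists a.
have xV' : x \in VB' by rewrite inE xV.
have sh' : subhyp inc setT setT VB' EB'.
  by apply: subhypT => //; apply/set0Pn; exists x.
have subPE : {subset map fst s' <= EB'} by move=> a aS; rewrite !inE aS orbT.
have w'' : wf VB' EB' x s'.
  apply: (@wf_edges setT setT VB' EB' x s' w') => a aS; split; first exact: subPE.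
  by apply: EV'; apply: subPE.
have toq : forall q, q \in VB' -> wreach VB' EB' x q.
  move=> q; rewrite inE => /orP [qV|/bigcupP [a aP qa]].
    exact: (wreach_sub (subsetUl _ _) (subsetUl _ _) (connectedW C xV qV)).
  by apply: (wreach_walk_edges EV' w'' _ qa); move: aP; rewrite inE.
have C' : connected inc VB' EB'.
  apply: connectedP => u q uV qV; apply: wreach_trans (toq q qV).
  exact: (wreach_sym xV' (toq u uV)).
have [gx [gxE xgx]] : exists e, e \in EB /\ x \in inc e.
  have [s0 [w0 l0]] := connectedW C xV yV.
  by apply: (first_edge w0); rewrite l0.
have [gy [gyE ygy]] : exists e, e \in EB /\ y \in inc e.
  have [s0 [w0 l0]] := connectedW C yV xV.
  by apply: (first_edge w0); rewrite l0 eq_sym.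
have gxE' : gx \in EB' by rewrite inE gxE.
have gyE' : gy \in EB' by rewrite inE gyE.
have ns' : nonseparable inc VB' EB'.
  apply: linked_nonsep => // z.
  have LB : forall a b, a \in EB -> b \in EB -> connect (rz EB' z) a b.
    move=> a b aE bE; apply: (connect_rz_sub (subsetUl _ _)).
    exact: (nonsep_linked z EV ns aE bE).
  have toB : forall a, a \in EB' -> exists2 g, g \in EB & connect (rz EB' z) a g.
    move=> a; rewrite inE => /orP [aE|]; first by exists a => //; exact: connect0.
    rewrite inE => aS.
    pose i := index a (map fst s').
    have iS : i < size s' by rewrite -(size_map fst) index_mem.
    have na : nth a (map fst s') i = a by rewrite nth_index.
    move: u'; rewrite -(cat_take_drop i (map snd s')) -cat_cons cat_uniq => /and3P [_ dj _].
    case: (boolP (z \in drop i (map snd s'))) => zd.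
      have nz : z \notin x :: take i (map snd s').
        apply: contra dj => zt; apply/hasP; by exists z.
      have c := left_link w' subPE gxE' xgx iS nz.
      rewrite (set_nth_default a) ?size_map // na in c.
      by exists gx => //; rewrite connect_rz_sym.
    have c := right_link w' subPE gyE' _ iS zd.
    rewrite (set_nth_default a) ?size_map // na l' in c.
    by exists gy => //; apply: c.
  move=> a b aE bE.
  have [ga gaE ca] := toB a aE; have [gb gbE cb] := toB b bE.
  apply: connect_trans ca _; apply: connect_trans (LB _ _ gaE gbE) _.
  by rewrite connect_rz_sym.
have [_ EBe] := M VB' EB' sh' ns' (subsetUl _ _) (subsetUl _ _).
have [e1 e1S] : exists e1, e1 \in map fst s'.
  case Es: s' => [|[e1 v1] t]; last by exists e1; rewrite mem_head.
  by move: yx; rewrite -l' Es /= eqxx.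
have : e1 \in EB' by rewrite !inE e1S orbT.
by rewrite EBe; apply/negP; apply: nE'.
Qed.


Definition rot1 (T : walk V E) : walk V E :=
  match T.2 with [::] => T | (e, v) :: s => (v, rcons s (e, v)) end.

Definition rotated VS ES (T T' : walk V E) :=
  [/\ closed_strict_trail inc VS ES T', anchors T' =i anchors T & perm_eq (wedges T') (wedges T)].

Lemma rotated_refl VS ES T : closed_strict_trail inc VS ES T -> rotated VS ES T T.
Proof. by move=> c; split. Qed.

Lemma rotated_trans VS ES T1 T2 T3 : rotated VS ES T1 T2 -> rotated VS ES T2 T3 -> rotated VS ES T1 T3.
Proof.
move=> [c2 a2 p2] [c3 a3 p3]; split => //; first by move=> q; rewrite a3 a2.
exact: perm_trans p3 p2.
Qed.

Lemma rot1_rotated VS ES T : closed_strict_trail inc VS ES T -> rotated VS ES T (rot1 T).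
Proof.
case: T => v0 [|[e1 v1] s1]; first by case=> _ [].
case=> [[v0V /= /and5P [u01 e10 e11 e1E /andP [v1V w1]]] [sz cl] st].
rewrite /rot1 /=; move: cl; rewrite /wlast /= => cl.
split.
- split.
  + split => //=; rewrite -cats1 wf_cat w1 cl /= u01 e10 e11 e1E v1V //.
  + split; first by rewrite /= size_rcons.
    by rewrite /wlast /= map_rcons last_rcons.
  + move: st; rewrite /strict_trail /wedges /= map_rcons rcons_uniq => /andP [-> ->].
    by [].
- move=> q; rewrite /anchors /= map_rcons !inE mem_rcons inE.
  case: (eqVneq q v0) => [->|]; last by case: (q == v1).
  have h : v0 \in v1 :: map snd s1 by rewrite -{1}cl mem_last.
  by rewrite /=; move: h; rewrite inE => /orP [] ->; rewrite ?orbT.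
- by rewrite /wedges /= map_rcons perm_rcons.
Qed.

Lemma rot_edge VS ES T e : closed_strict_trail inc VS ES T -> e \in wedges T ->
  exists T', rotated VS ES T T' /\ exists v s, T'.2 = (e, v) :: s.
Proof.
move: {2}(index e (wedges T)) (erefl (index e (wedges T))) => n.
elim: n T => [|n IH] [v0 s]; case: s => [|[e1 v1] s1] ind c eT; try by move: eT.
- exists (v0, (e1, v1) :: s1); split; first exact: rotated_refl.
  move: ind; rewrite /wedges /=; case: (eqVneq e1 e) => [->|] // _.
  by exists v1, s1.
- move: ind eT; rewrite /wedges /= inE eq_sym; case: (eqVneq e e1) => // ne [ind] es1.
  have r1 := rot1_rotated c; case: (r1) => c1 _ _; rewrite /= in es1.
  have i1 : index e (wedges (rot1 (v0, (e1, v1) :: s1))) = n.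
    by rewrite /rot1 /wedges /= map_rcons -cats1 index_cat es1.
  have m1 : e \in wedges (rot1 (v0, (e1, v1) :: s1)).
    by rewrite /rot1 /wedges /= map_rcons mem_rcons inE es1 orbT.
  have [T' [r2 hd]] := IH _ i1 c1 m1.
  by exists T'; split => //; exact: rotated_trans r1 r2.
Qed.

Lemma rot_vertex VS ES T a : closed_strict_trail inc VS ES T -> a \in anchors T ->
  exists T', rotated VS ES T T' /\ T'.1 = a.
Proof.
move=> c aT.
have aT2 : a \in map snd T.2.
  case: T c aT => v0 s [_ [sz cl] _]; rewrite /anchors inE => /orP [/eqP ->|//].
  move: cl; rewrite /wlast /= => <-; case: s sz => // [[e v] s] _ /=.
  exact: mem_last.
move: {2}(index a (map snd T.2)) (erefl (index a (map snd T.2))) => n.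
elim: n T c {aT} aT2 => [|n IH] [v0 s]; case: s => [|[e1 v1] s1] c aT2 ind; try by move: aT2.
- have r1 := rot1_rotated c; exists (rot1 (v0, (e1, v1) :: s1)); split => //.
  by move: ind aT2; rewrite /rot1 /= inE; case: (eqVneq v1 a).
- move: ind aT2 => /=; rewrite inE; case: (eqVneq v1 a) => [->|ne] //= [ind] as1.
  have r1 := rot1_rotated c; case: (r1) => c1 _ _.
  have m1 : a \in map snd (rot1 (v0, (e1, v1) :: s1)).2.
    by rewrite /rot1 /= map_rcons mem_rcons inE as1 orbT.
  have i1 : index a (map snd (rot1 (v0, (e1, v1) :: s1)).2) = n.
    by rewrite /rot1 /= map_rcons -cats1 index_cat as1.
  have [T' [r2 hd]] := IH _ c1 m1 i1.
  by exists T'; split => //; exact: rotated_trans r1 r2.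
Qed.


Definition nbr EB w u := exists P, [/\ wf setT setT w P, last w (map snd P) = u &
  forall e, e \in map fst P -> e \notin EB].

Lemma runlem VB EB w u : block inc setT setT VB EB -> nbr EB w u -> w \in VB -> u \in VB -> u = w.
Proof.
move=> bB [P [wP lP nP]] wV uV; apply/eqP/negPn/negP => uw.
by apply: (ear bB wP wV); rewrite ?lP.
Qed.

Lemma restrict_gen VB EB s u w : block inc setT setT VB EB ->
  wf setT setT u s -> nbr EB w u -> w \in VB -> last u (map snd s) \in VB ->
  [/\ wf VB EB w [seq p <- s | p.1 \in EB],
      last w (map snd [seq p <- s | p.1 \in EB]) = last u (map snd s) &
      forall q, q \in u :: map snd s -> q \in VB -> q \in w :: map snd [seq p <- s | p.1 \in EB]].
Proof.
move=> bB; have EV := block_edges bB.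
elim: s u w => [|[e v] s IH] u w /=.
  move=> _ nb wV uV; have uw := runlem bB nb wV uV; subst u.
  by split => // q; rewrite inE => /eqP ->; rewrite inE eqxx.
case/and5P=> uv ue ve _ /andP [_ ws] nb wV lV.
case: (boolP (e \in EB)) => eB /=.
  have uV : u \in VB by apply: (subsetP (EV e eB)).
  have uw := runlem bB nb wV uV; subst u.
  have vV : v \in VB by apply: (subsetP (EV e eB)).
  have nv : nbr EB v v by exists [::].
  have [w1 l1 a1] := IH v v ws nv vV lV.
  split => //; first by rewrite uv ue ve eB vV.
  move=> q; rewrite inE => /orP [/eqP ->|qs] qV; first by rewrite mem_head.
  by rewrite inE a1 ?orbT.
have nv : nbr EB w v.
  case: nb => P [wP lP nP]; exists (rcons P (e, v)); split.
  - by rewrite -cats1 wf_cat wP lP /= uv ue ve !inE.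
  - by rewrite map_rcons last_rcons.
  - move=> a; rewrite map_rcons mem_rcons inE => /orP [/eqP ->//|]; exact: nP.
have [w1 l1 a1] := IH v w ws nv wV lV.
split => // q; rewrite inE => /orP [/eqP ->|qs] qV.
  by rewrite (runlem bB nb wV qV) mem_head.
exact: a1.
Qed.

Lemma restrict VB EB T e0 : block inc setT setT VB EB ->
  closed_strict_trail inc setT setT T -> e0 \in wedges T -> e0 \in EB ->
  exists R, [/\ closed_strict_trail inc VB EB R,
    (forall e, e \in EB -> (e \in wedges R) = (e \in wedges T)),
    {subset anchors R <= anchors T} &
    forall q, q \in anchors T -> q \in VB -> q \in anchors R].
Proof.
move=> bB c e0T e0B; have EV := block_edges bB.
have [[v0 s] [[c' an pe] [v1 [s1 hd]]]] := rot_edge c e0T.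
rewrite /= in hd; subst s.
case: c' => [[_ /= /and5P [u01 e00 e01 _ /andP [_ w1]]] [_ cl] st].
have v0V : v0 \in VB by apply: (subsetP (EV e0 e0B)).
have w0 : wf setT setT v0 ((e0, v1) :: s1) by rewrite /= u01 e00 e01 !inE w1.
have nb : nbr EB v0 v0 by exists [::].
have lV : last v0 (map snd ((e0, v1) :: s1)) \in VB by move: cl; rewrite /wlast /= => ->.
have [wr lr ar] := restrict_gen bB w0 nb v0V lV.
set F := [seq p <- (e0, v1) :: s1 | p.1 \in EB] in wr lr ar.
have Fe : forall e, (e \in map fst F) = (e \in EB) && (e \in map fst ((e0, v1) :: s1)).
  by move=> e; rewrite /F -filter_map mem_filter.
exists (v0, F); split.
- split; first by split.
  + split; last by rewrite /wlast /= lr; move: cl; rewrite /wlast.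
    rewrite /F /= e0B /=; case E1: [seq p <- s1 | p.1 \in EB] => [|p t] //.
    by move: lr; rewrite /F /= e0B E1 /= => lr; move: cl; rewrite /wlast /= -lr => /eqP; rewrite eq_sym (negbTE u01).
  + by rewrite /strict_trail /wedges /= /F -filter_map filter_uniq.
- move=> e eB; rewrite /wedges /= Fe eB /=.
  exact: (perm_mem pe e).
- move=> q; rewrite /anchors /= inE => /orP [/eqP ->|qF].
    by rewrite -an mem_head.
  rewrite -an inE; apply/orP; right.
  exact: (mem_subseq (map_subseq snd (filter_subseq _ _)) qF).
- by move=> q qT qV; rewrite -an in qT; apply: ar.
Qed.


Definition disj (w1 w2 : walk V E) := ~~ has (fun x => x \in anchors w2) (anchors w1).

Lemma disj_sub (w1 w2 f1 f2 : walk V E) : {subset anchors w1 <= anchors f1} ->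
  {subset anchors w2 <= anchors f2} -> disj f1 f2 -> disj w1 w2.
Proof.
move=> s1 s2 d; apply/hasPn => x xw1; apply/negP => xw2.
by move/hasPn: d => /(_ x (s1 x xw1)); rewrite (s2 x xw2).
Qed.

Lemma fam_restrict VB EB (F : seq (walk V E)) : block inc setT setT VB EB ->
  (forall w, w \in F -> closed_strict_trail inc setT setT w) -> pairwise disj F ->
  exists G : seq (walk V E), [/\ forall g : walk V E, g \in G -> closed_strict_trail inc VB EB g,
    forall e, e \in EB -> count (fun w => e \in wedges w) G = count (fun w => e \in wedges w) F,
    pairwise disj G & forall g : walk V E, g \in G -> exists2 f : walk V E, f \in F & {subset anchors g <= anchors f}].
Proof.
move=> bB; elim: F => [|t F IH] cF pF.
  by exists [::]; split.
move: pF; rewrite pairwise_cons => /andP [/allP dt pF].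
have [G [cG nG pG sG]] := IH (fun w wF => cF w (@mem_behead _ (t :: F) _ wF)) pF.
case: (boolP (has (fun e => e \in EB) (wedges t))) => [/hasP [e0 e0t e0B]|nt].
  have [R [cR eR aR _]] := restrict bB (cF t (mem_head _ _)) e0t e0B.
  exists (R :: G); split.
  - by move=> g; rewrite inE => /orP [/eqP ->|/cG].
  - by move=> e eB /=; rewrite nG // eR.
  - rewrite pairwise_cons pG andbT; apply/allP => g gG.
    have [f fF sf] := sG g gG.
    exact: (disj_sub aR sf (dt f fF)).
  - move=> g; rewrite inE => /orP [/eqP ->|/sG [f fF sf]].
      by exists t; rewrite ?mem_head.
    by exists f; rewrite ?inE ?fF ?orbT.
exists G; split => //.
- move=> e eB /=; rewrite nG //.
  by case: (boolP (e \in wedges t)) => // et; move/hasPn: nt => /(_ e et); rewrite eB.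
- by move=> g /sG [f fF sf]; exists f; rewrite ?inE ?fF ?orbT.
Qed.

Lemma part1_fwd : has_euler_family inc setT setT ->
  forall VB EB, block inc setT setT VB EB -> has_euler_family inc VB EB.
Proof.
move=> [F [cF nF pF]] VB EB bB.
have [G [cG nG pG _]] := fam_restrict bB cF pF.
exists G; split => // e eB; rewrite nG // nF //; exact: in_setT.
Qed.

Lemma walk_linked VS ES (ES' : {set E}) z e1 v1 s :
  wf VS ES v1 s -> {subset map fst s <= ES'} -> e1 \in ES' -> v1 \in inc e1 ->
  z \notin v1 :: map snd s -> forall e, e \in map fst s -> connect (rz ES' z) e1 e.
Proof.
elim: s e1 v1 => [|[e v] s IH] e1 v1 //= /and5P [_ ue ve _ /andP [_ w]] sub e1E ve1.
rewrite !inE !negb_or => /and3P [vz1 vz nz] a.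
have eE : e \in ES' by apply: sub; rewrite mem_head.
have c1 : rz ES' z e1 e by apply: (rzI e1E eE _ ve1 ue); rewrite eq_sym.
rewrite inE => /orP [/eqP ->|aS]; first exact: connect1.
apply: connect_trans (connect1 c1) _; apply: (IH e v w _ eE ve) => //.
  by move=> b bS; apply: sub; rewrite inE bS orbT.
by rewrite inE negb_or vz.
Qed.

Lemma sep_conn_of v : connected inc setT setT -> separating inc setT setT v ->
  separating_conn inc setT setT v.
Proof.
move=> C [_ [Cs [HC S]]].
have eC : Cs = setT.
  apply/setP => x; rewrite inE; apply/(HC x); split; first exact: in_setT.
  case: (eqVneq x v) => [->|xv]; [by left | right].
  by apply: C; rewrite ?in_setT // eq_sym.
have eE : [set e in setT | inc e \subset Cs] = setT.
  by apply/setP => e; rewrite !inE eC subsetT.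
by rewrite eE eC in S.
Qed.

Lemma sep_of_conn v : connected inc setT setT -> separating_conn inc setT setT v ->
  separating inc setT setT v.
Proof.
move=> C S; split; first exact: in_setT.
exists setT; split.
  move=> x; split => [_|_]; last exact: in_setT.
  split; first exact: in_setT.
  case: (eqVneq x v) => [->|xv]; [by left | right].
  by apply: C; rewrite ?in_setT // eq_sym.
have eE : [set e in setT | inc e \subset setT] = setT.
  by apply/setP => e; rewrite !inE subsetT.
by rewrite eE.
Qed.

Lemma block_has_edge VB EB (e : E) : connected inc setT setT ->
  block inc setT setT VB EB -> EB != set0.
Proof.
move=> C bB; apply/negP => /eqP EB0.
case: (bB) => [[_ _ n _] [CB _ _] M].
case/set0Pn: n => v vB.
have [g vg] : exists g, v \in inc g.
  case/set0Pn: (Hnoempty e) => y ye.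
  case: (eqVneq v y) => [->|vy]; first by exists e.
  have [s [w l]] := connectedW C (in_setT v) (in_setT y).
  have h : last v (map snd s) != v by rewrite l eq_sym.
  by have [g [_ vg]] := first_edge w h; exists g.
have VBv : VB \subset inc g.
  apply/subsetP => x xB; case: (eqVneq x v) => [->//|xv].
  have [s [w l]] := connectedW CB vB xB.
  have h : last v (map snd s) != v by rewrite l.
  have [a [aE _]] := first_edge w h.
  by rewrite EB0 inE in aE.
have sh : subhyp inc setT setT (inc g) [set g].
  by apply: subhypT => // a; rewrite inE => /eqP ->.
have sE : EB \subset [set g] by rewrite EB0 sub0set.
have [_ h] := M _ _ sh (nonsep_edge g) VBv sE.
by move: EB0; rewrite -h => /setP /(_ g); rewrite !inE eqxx.
Qed.


Lemma part2_fwd : connected inc setT setT -> has_euler_tour inc setT setT ->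
  forall VB EB, block inc setT setT VB EB ->
    exists w, euler_tour inc VB EB w /\
      (forall v, v \in VB -> separating inc setT setT v -> v \in anchors w).
Proof.
move=> C [[v0 s] [cT allT]] VB EB bB.
case: s cT allT => [|[e1 v1] s1] cT allT; first by case: cT => _ [].
have nE := block_has_edge e1 C bB.
case/set0Pn: nE => e0 e0B.
have [R [cR eR aR aR2]] := restrict bB cT (allT e0 (in_setT _)) e0B.
exists R; split.
  by split => // e eB; rewrite eR // allT // in_setT.
move=> v vB /(sep_conn_of C) S; apply: aR2 => //.
apply/negPn/negP => vT; apply: (sep_notlinked S) => a b _ _.
case: (cT) => [[_ /= /and5P [_ _ _ _ /andP [_ w1]]] _ _].
have toe : forall e, connect (rz setT v) e1 e.
  move=> e; have := allT e (in_setT _); rewrite /wedges /= inE => /orP [/eqP ->|es].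
    exact: connect0.
  have sub : {subset map fst s1 <= [set: E]} by move=> x _; exact: in_setT.
  have ve1 : v1 \in inc e1 by case: cT => [[_ /= /and5P [_ _ ->]]].
  have nz : v \notin v1 :: map snd s1.
    by apply: contra vT => h; rewrite /anchors /= inE h orbT.
  exact: (walk_linked w1 sub (in_setT e1) ve1 nz es).
by apply: connect_trans (toe b); rewrite connect_rz_sym.
Qed.


Local Notation cstT := (closed_strict_trail inc setT setT).
Definition cnt e (L : seq (walk V E)) := count (fun w => e \in wedges w) L.
Definition subw (t T : walk V E) :=
  {subset anchors t <= anchors T} /\ {subset wedges t <= wedges T}.

Lemma subw_refl t : subw t t. Proof. by split. Qed.
Lemma subw_trans t1 t2 t3 : subw t1 t2 -> subw t2 t3 -> subw t1 t3.
Proof. by move=> [a1 e1] [a2 e2]; split => x h; [exact: a2 (a1 x h) | exact: e2 (e1 x h)]. Qed.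

Lemma disj_sym t1 t2 : disj t1 t2 = disj t2 t1.
Proof.
by apply/idP/idP => /hasPn h; apply/hasPn => x xa; apply/negP => xb; move: (h x xb); rewrite xa.
Qed.

Lemma pairwise_in (r : rel (walk V E)) L a b : pairwise r L -> a \in L -> b \in L -> a != b ->
  r a b || r b a.
Proof.
elim: L => [|c L IH] //; rewrite pairwise_cons => /andP [/allP ac pL].
rewrite !inE => /orP [/eqP ->|aL] /orP [/eqP ->|bL] ab.
- by rewrite eqxx in ab.
- by rewrite ac.
- by rewrite ac ?orbT.
- exact: IH.
Qed.

Lemma splice T1 T2 a : cstT T1 -> cstT T2 -> a \in anchors T1 -> a \in anchors T2 ->
  (forall e, e \in wedges T1 -> e \notin wedges T2) ->
  exists T, [/\ cstT T, anchors T =i anchors T1 ++ anchors T2 &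
    forall e, (e \in wedges T) = (e \in wedges T1) || (e \in wedges T2)].
Proof.
move=> c1 c2 a1 a2 dj.
have [[x1 s1] [[c1' an1 pe1] h1]] := rot_vertex c1 a1.
have [[x2 s2] [[c2' an2 pe2] h2]] := rot_vertex c2 a2.
rewrite /= in h1 h2; subst x1 x2.
case: c1' => [[_ w1] [sz1 l1] u1]; case: c2' => [[_ w2] [sz2 l2] u2].
rewrite /wlast /= in l1 l2.
exists (a, s1 ++ s2); split.
- split.
  + by split => //; rewrite wf_cat w1 l1 w2.
  + split; first by rewrite /= size_cat (leq_trans sz1) // leq_addr.
    by rewrite /wlast /= map_cat last_cat l1 l2.
  + rewrite /strict_trail /wedges /= map_cat cat_uniq u1 u2 andbT /=.
    apply/hasPn => e e2; apply/negP => e1.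
    have := dj e; rewrite -(perm_mem pe1) -(perm_mem pe2) => /(_ e1).
    by rewrite /wedges /= e2.
- move=> q; rewrite mem_cat -an1 -an2 /anchors /= map_cat !inE mem_cat.
  by case: (q == a); rewrite /= ?orbT.
- move=> e; rewrite -(perm_mem pe1) -(perm_mem pe2) /wedges /= map_cat mem_cat.
  by [].
Qed.

Lemma splice_all t (G1 : seq (walk V E)) : cstT t ->
  (forall g : walk V E, g \in G1 -> cstT g /\ ~~ disj t g) ->
  (forall e, e \in wedges t -> cnt e G1 = 0) -> (forall e, cnt e G1 <= 1) ->
  exists T, [/\ cstT T, subw t T, (forall g : walk V E, g \in G1 -> subw g T),
    (forall e, (e \in wedges T) = (e \in wedges t) || (cnt e G1 != 0)) &
    forall x, x \in anchors T -> x \in anchors t \/ exists2 g : walk V E, g \in G1 & x \in anchors g].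
Proof.
move=> ct; elim: G1 => [|g G1 IH] HG d1 c1.
  exists t; split => //; first exact: subw_refl.
  - by move=> e; rewrite /cnt /= orbF.
  - by move=> x; left.
have HG' : forall g' : walk V E, g' \in G1 -> cstT g' /\ ~~ disj t g'.
  by move=> g' g'G; apply: HG; rewrite inE g'G orbT.
have d1' : forall e, e \in wedges t -> cnt e G1 = 0.
  by move=> e et; move: (d1 e et); rewrite /cnt /=; case: (e \in wedges g).
have c1' : forall e, cnt e G1 <= 1.
  by move=> e; move: (c1 e); rewrite /cnt /=; case: (e \in wedges g) => //= /ltnW.
have [T' [cT' st sG eT' aT']] := IH HG' d1' c1'.
have [cg ndg] := HG g (mem_head _ _).
have [b bt bg] : exists2 b, b \in anchors t & b \in anchors g.
  by move: ndg; rewrite negbK => /hasP [b bt bg]; exists b.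
have djT : forall e, e \in wedges T' -> e \notin wedges g.
  move=> e; rewrite eT' => /orP [et|ne]; apply/negP => eg.
    by move: (d1 e et); rewrite /cnt /= eg.
  by move: (c1 e); rewrite /cnt /= eg add1n ltnS leqn0 -/(cnt e G1) (negbTE ne).
have [T [cT aT eT]] := splice cT' cg (st.1 b bt) bg djT.
exists T; split => //.
- apply: subw_trans st _; split => x; first by rewrite aT mem_cat => ->.
  by rewrite eT => ->.
- move=> g'; rewrite inE => /orP [/eqP ->|g'G].
    by split => x; [rewrite aT mem_cat orbC => -> | rewrite eT orbC => ->].
  apply: subw_trans (sG g' g'G) _; split => x; first by rewrite aT mem_cat => ->.
  by rewrite eT => ->.
- move=> e; rewrite eT eT' /cnt /=; case: (e \in wedges g); rewrite /= ?orbT //.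
  by rewrite orbF.
- move=> x; rewrite aT mem_cat => /orP [/aT' [->|[g' g'G xg']]|xg].
  + by left.
  + by right; exists g' => //; rewrite inE g'G orbT.
  + by right; exists g => //; rewrite mem_head.
Qed.

Lemma count_split (P Q : pred (walk V E)) L :
  count P [seq x <- L | Q x] + count P [seq x <- L | ~~ Q x] = count P L.
Proof.
elim: L => [|a L IH] //=; case: (Q a) => /=; first by rewrite -addnA IH.
by rewrite addnCA IH.
Qed.

Lemma count_filter_le (P Q : pred (walk V E)) L : count P [seq x <- L | Q x] <= count P L.
Proof. by rewrite -(count_split P Q L) leq_addr. Qed.

Lemma merge (L : seq (walk V E)) : (forall t, t \in L -> cstT t) -> (forall e, cnt e L <= 1) ->
  exists L' : seq (walk V E), [/\ forall T, T \in L' -> cstT T,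
    forall e, cnt e L' = cnt e L, pairwise disj L' &
    forall t, t \in L -> exists2 T, T \in L' & subw t T].
Proof.
elim: L => [|t L0 IH] cL c1.
  by exists [::]; split.
have cL0 : forall t', t' \in L0 -> cstT t' by move=> t' tL; apply: cL; rewrite inE tL orbT.
have c10 : forall e, cnt e L0 <= 1.
  by move=> e; move: (c1 e); rewrite /cnt /=; case: (e \in wedges t) => //= /ltnW.
have [G [cG nG pG sG]] := IH cL0 c10.
pose G1 := [seq g <- G | ~~ disj t g]; pose G2 := [seq g <- G | ~~ ~~ disj t g].
have sp : forall e, cnt e G1 + cnt e G2 = cnt e G by move=> e; apply: count_split.
have d1 : forall e, e \in wedges t -> cnt e G1 = 0.
  move=> e et; have := c1 e; rewrite /cnt /= et add1n ltnS leqn0 => /eqP h.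
  apply/eqP; rewrite -leqn0; apply: leq_trans (count_filter_le _ _ G) _.
  by rewrite -/(cnt e G) nG /cnt h.
have c1' : forall e, cnt e G1 <= 1.
  by move=> e; apply: leq_trans _ (c10 e); rewrite -nG; apply: count_filter_le.
have HG : forall g : walk V E, g \in G1 -> cstT g /\ ~~ disj t g.
  by move=> g; rewrite mem_filter => /andP [h gG]; split => //; apply: cG.
have [T [cT st sG1 eT aT]] := splice_all (cL t (mem_head _ _)) HG d1 c1'.
exists (T :: G2); split.
- move=> T'; rewrite inE => /orP [/eqP ->//|]; rewrite mem_filter => /andP [_]; exact: cG.
- move=> e; rewrite /cnt /= -/(cnt e G2) -/(cnt e L0) -nG -(sp e) eT.
  case: (boolP (e \in wedges t)) => et /=.
    have h0 : cnt e G = 0.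
      by have := c1 e; rewrite /cnt /= et add1n ltnS leqn0 -/(cnt e L0) -nG => /eqP.
    have h2 : cnt e G2 = 0.
      by move: (sp e); rewrite h0 => /eqP; rewrite addn_eq0 => /andP [_ /eqP].
    by rewrite h2 (d1 e et).
  by have := c1' e; rewrite /cnt; case: (count _ G1) => [|[|]].
- rewrite pairwise_cons (pairwise_filter _ pG) andbT; apply/allP => g.
  rewrite mem_filter negbK => /andP [dg gG]; apply/hasPn => x xT; apply/negP => xg.
  case: (aT x xT) => [xt|[g1 g1G xg1]].
    by move/hasPn: dg => /(_ x xt); rewrite xg.
  move: g1G; rewrite mem_filter => /andP [ng1 g1G].
  have neq : g1 != g by apply: contraNneq ng1 => ->.
  have := pairwise_in pG g1G gG neq; rewrite (disj_sym g g1) orbb => /hasPn /(_ x xg1).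
  by rewrite xg.
- move=> t'; rewrite inE => /orP [/eqP ->|t'L]; first by exists T; rewrite ?mem_head.
  have [g gG sg] := sG t' t'L.
  case: (boolP (disj t g)) => dg.
    by exists g; [rewrite inE mem_filter dg gG orbT | ].
  by exists T; [rewrite mem_head | apply: subw_trans sg (sG1 g _); rewrite mem_filter dg].
Qed.


Lemma nbr_trans EB a b c : nbr EB a b -> nbr EB b c -> nbr EB a c.
Proof.
move=> [P1 [w1 l1 n1]] [P2 [w2 l2 n2]]; exists (P1 ++ P2); split.
- by rewrite wf_cat w1 l1 w2.
- by rewrite map_cat last_cat l1.
- by move=> e; rewrite map_cat mem_cat => /orP [/n1|/n2].
Qed.

Lemma nbr_step EB g a b : g \notin EB -> a \in inc g -> b \in inc g -> nbr EB a b.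
Proof.
move=> gB ag bg; case: (eqVneq a b) => [->|ab]; first by exists [::].
exists [:: (g, b)]; split => //=; first by rewrite ab ag bg !inE.
by move=> e; rewrite inE => /eqP ->.
Qed.

Definition Qd VB EB x := exists w, [/\ w \in VB, w != x & nbr EB w x].

Lemma chainQ VB EB x e2 p g : block inc setT setT VB EB ->
  path (rz setT x) g p -> last g p = e2 -> x \in inc e2 -> e2 \notin EB ->
  (g \in EB -> Qd VB EB x) /\ (g \notin EB -> forall y, y \in inc g -> nbr EB y x \/ Qd VB EB x).
Proof.
move=> bB; have EV := block_edges bB.
elim: p g => [|g' p IH] g /=.
  move=> _ <- xg gB; split; first by rewrite (negbTE gB).
  by move=> _ y yg; left; apply: (nbr_step gB).
case/andP=> r pp lp xe2 e2B.
have [IH1 IH2] := IH g' pp lp xe2 e2B.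
case/rzP: r => _ _ [s [sx sg sg']].
split => [gB|gB y yg].
  case: (boolP (g' \in EB)) => g'B; first exact: IH1.
  case: (IH2 g'B s sg') => // nb.
  by exists s; split => //; apply: (subsetP (EV g gB)).
case: (boolP (g' \in EB)) => g'B; first by right; apply: IH1.
case: (IH2 g'B s sg') => [nb|]; last by right.
by left; apply: nbr_trans nb; apply: (nbr_step gB).
Qed.

Lemma notconnect_blocks VB EB x g h : block inc setT setT VB EB ->
  g \in EB -> h \notin EB -> x \in inc g -> x \in inc h -> ~~ connect (rz setT x) g h.
Proof.
move=> bB gB hB xg xh; apply/negP => /connectP [p pp lp].
have [Q1 _] := chainQ bB pp (esym lp) xh hB.
have [w [wV wx nb]] := Q1 gB.
have xV : x \in VB by apply: (subsetP (block_edges bB gB)).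
by move: wx; rewrite (runlem bB nb wV xV) eqxx.
Qed.

Definition blb (p : {set V} * {set E}) : bool :=
  if excluded_middle_informative (block inc setT setT p.1 p.2) then true else false.

Lemma blbP p : reflect (block inc setT setT p.1 p.2) (blb p).
Proof. by rewrite /blb; case: excluded_middle_informative => h; constructor. Qed.

Definition BL := enum [pred p | blb p].

Lemma BLP p : (p \in BL) = blb p.
Proof. by rewrite mem_enum inE. Qed.

Lemma count_blocks e : count (fun p : {set V} * {set E} => e \in p.2) BL = 1.
Proof.
have [VB [EB [bB eB]]] := block_of_edge e.
have -> : count (fun p : {set V} * {set E} => e \in p.2) BL = count_mem (VB, EB) BL.
  apply: eq_in_count => p; rewrite BLP => bp0; have bp := elimT (blbP p) bp0.
  apply/idP/eqP => [ep|pe]; last by rewrite pe.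
  have [h1 h2] := block_unique bp bB ep eB.
  by move: h1 h2; case: p {bp0 bp ep} => a b /= -> ->.
by rewrite count_uniq_mem ?enum_uniq // BLP (introT (blbP (VB, EB)) bB).
Qed.

Lemma edges_in VS ES T : closed_strict_trail inc VS ES T -> forall e, e \in wedges T -> e \in ES.
Proof.
case: T => v0 s [[_ w] _ _]; rewrite /wedges /=.
elim: s v0 w => [|[e' v] s IH] u //= /and5P [_ _ _ eE /andP [_ w]] e.
by rewrite inE => /orP [/eqP ->//|]; apply: IH w e.
Qed.

Lemma cst_lift VS ES T : closed_strict_trail inc VS ES T -> cstT T.
Proof.
case: T => v0 s [[v0V w] c st]; split => //; split; first exact: in_setT.
by apply: wf_sub w; apply: subsetT.
Qed.

Lemma count1_eq e (L : seq (walk V E)) a b : cnt e L = 1 -> a \in L -> b \in L ->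
  e \in wedges a -> e \in wedges b -> a = b.
Proof.
rewrite /cnt; elim: L => [|c L IH] //=.
have z0 : forall y : walk V E, count (fun w => e \in wedges w) L = 0 -> y \in L -> e \in wedges y -> False.
  move=> y h yL ey; have : has (fun w => e \in wedges w) L by apply/hasP; exists y.
  by rewrite has_count h.
case: (boolP (e \in wedges c)) => ec /=.
  move=> /eqP; rewrite add1n eqSS => /eqP h.
  rewrite !inE => /orP [/eqP ->|aL] /orP [/eqP ->|bL] ea eb //.
  - by case: (z0 b h bL eb).
  - by case: (z0 a h aL ea).
  - by case: (z0 a h aL ea).
rewrite add0n => h; rewrite !inE => /orP [/eqP ac|aL] /orP [/eqP bc|bL] ea eb.
- by rewrite ac bc.
- by move: ea; rewrite ac (negbTE ec).
- by move: eb; rewrite bc (negbTE ec).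
- exact: IH.
Qed.


Lemma part1_bwd : (forall VB EB, block inc setT setT VB EB -> has_euler_family inc VB EB) ->
  has_euler_family inc setT setT.
Proof.
move=> H.
have [fam Hf] : exists fam : {set V} * {set E} -> seq (walk V E),
    forall p, blb p -> euler_family inc p.1 p.2 (fam p).
  apply: (@fin_all_exists _ (fun _ => seq (walk V E)) (fun p F => blb p -> euler_family inc p.1 p.2 F)) => p.
  case: (blbP p) => [bp|_]; last by exists [::].
  by have [F hF] := H _ _ bp; exists F.
pose L := flatten (map fam BL).
have cL : forall t, t \in L -> cstT t.
  move=> t /flattenP [F /mapP [p pB ->] tF].
  rewrite BLP in pB; have [cF _ _] := Hf p pB.
  exact: (cst_lift (cF t tF)).
have nL : forall e, cnt e L = 1.
  move=> e; rewrite /cnt count_flatten -map_comp -(count_blocks e) -sumn_count.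
  congr sumn; apply/eq_in_map => p; rewrite BLP => pB /=.
  have [cF nF _] := Hf p pB.
  case: (boolP (e \in p.2)) => ep; first by rewrite nF.
  rewrite (eq_in_count (a2 := pred0)) ?count_pred0 // => t tF /=.
  by apply/negP => /(edges_in (cF t tF)); apply/negP.
have [L' [cL' nL' pL' _]] := merge cL (fun e => eq_leq (nL e)).
by exists L'; split => // e _; have := nL' e; rewrite nL /cnt => ->.
Qed.

Lemma part2_bwd : 0 < #|V| -> connected inc setT setT ->
  (forall VB EB, block inc setT setT VB EB ->
    exists w, euler_tour inc VB EB w /\
      (forall v, v \in VB -> separating inc setT setT v -> v \in anchors w)) ->
  has_euler_tour inc setT setT.
Proof.
move=> HV C H.
have [v0 _] := card_gt0P HV.
pose SP (p : {set V} * {set E}) (w : walk V E) :=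
  euler_tour inc p.1 p.2 w /\ (forall v, v \in p.1 -> separating inc setT setT v -> v \in anchors w).
have [tour Ht] : exists tour : {set V} * {set E} -> walk V E, forall p, blb p -> SP p (tour p).
  apply: (@fin_all_exists _ (fun _ => walk V E) (fun p w => blb p -> SP p w)) => p.
  case: (blbP p) => [bp|_]; last by exists (v0, [::]).
  by have [w hw] := H _ _ bp; exists w.
pose L := map tour BL.
have cL : forall t, t \in L -> cstT t.
  move=> t /mapP [p pB ->]; rewrite BLP in pB; have [[ct _] _] := Ht p pB.
  exact: cst_lift ct.
have nL : forall e, cnt e L = 1.
  move=> e; rewrite /cnt count_map -(count_blocks e); apply: eq_in_count => p.
  rewrite BLP => pB /=; have [[ct cov] _] := Ht p pB.
  apply/idP/idP => [/(edges_in ct)//|]; exact: cov.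
have [L' [cL' nL' pL' sL']] := merge cL (fun e => eq_leq (nL e)).
have nL1 : forall e, cnt e L' = 1 by move=> e; rewrite nL'.
have [VB0 [EB0 [bB0 _]]] := block_of_vertex v0.
have pB0 : blb (VB0, EB0) by apply/(blbP (VB0, EB0)).
have [[[_ [sz0 _] _] _] _] := Ht _ pB0.
have [e0 e0t] : exists e0, e0 \in wedges (tour (VB0, EB0)).
  by case: (tour _) sz0 => a [|[e v] t] //= _; exists e; rewrite /wedges mem_head.
have [T1 T1L e0T1] : exists2 T1, T1 \in L' & e0 \in wedges T1.
  by apply/hasP; rewrite has_count; move: (nL1 e0); rewrite /cnt => ->.
have track : forall e, exists VB EB, [/\ block inc setT setT VB EB, e \in EB &
    exists2 T, T \in L' & [/\ e \in wedges T, {subset EB <= wedges T} &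
       forall v, v \in VB -> separating inc setT setT v -> v \in anchors T]].
  move=> e; have [VB [EB [bB eB]]] := block_of_edge e.
  have pB : blb (VB, EB) by apply/(blbP (VB, EB)).
  have [[ct cov] sp] := Ht _ pB.
  have tL : tour (VB, EB) \in L by apply: map_f; rewrite BLP.
  have [T TL [sa se]] := sL' _ tL.
  exists VB, EB; split => //; exists T => //; split.
  - by apply: se; apply: cov.
  - by move=> a aB; apply: se; apply: cov.
  - by move=> v vB sv; apply: sa; apply: sp.
exists T1; split; first exact: cL' T1 T1L.
move=> e2 _; apply/negPn/negP => ne2.
case/set0Pn: (Hnoempty e0) => a ae0; case/set0Pn: (Hnoempty e2) => b be2.
have [s [w l]] := connectedW C (in_setT a) (in_setT b).
pose S := [set e | e \in wedges T1].
have e0S : e0 \in S by rewrite inE.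
have e2S : e2 \notin S by rewrite inE.
have bl : last a (map snd s) \in inc e2 by rewrite l.
have [x [g1 [h1 [g1S _ h1S xg1 xh1]]]] := boundary w e0S ae0 (in_setT e2) e2S bl.
rewrite inE in g1S; rewrite inE in h1S.
have [VB1 [EB1 [bB1 g1B [T TL [gT sub1 sp1]]]]] := track g1.
have TT1 : T = T1 := count1_eq (nL1 g1) TL T1L gT g1S.
have [VB2 [EB2 [bB2 h1B [T2 T2L [hT2 _ sp2]]]]] := track h1.
have h1B1 : h1 \notin EB1.
  by apply/negP => h; move: h1S; rewrite -TT1 (sub1 h1 h).
have xV1 : x \in VB1 by apply: (subsetP (block_edges bB1 g1B)).
have xV2 : x \in VB2 by apply: (subsetP (block_edges bB2 h1B)).
have nc := notconnect_blocks bB1 g1B h1B1 xg1 xh1.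
have EVT : forall e, e \in [set: E] -> inc e \subset [set: V] by move=> e _; apply: subsetT.
have sx := sep_of_conn C (notlinked_sep EVT C (in_setT g1) (in_setT h1) nc).
have x1 := sp1 x xV1 sx; have x2 := sp2 x xV2 sx.
rewrite TT1 in x1.
have neq : T1 != T2 by apply/eqP => E12; move: h1S; rewrite E12 hT2.
have := pairwise_in pL' T1L T2L neq; rewrite /disj => /orP [] /hasPn h.
  by move: (h x x1); rewrite x2.
by move: (h x x2); rewrite x1.
Qed.

Theorem theorem2p21_sec (HV : 0 < #|V|) :
  (has_euler_family inc setT setT <->
     (forall VB EB, block inc setT setT VB EB -> has_euler_family inc VB EB))
  /\
  (connected inc setT setT ->
     (has_euler_tour inc setT setT <->
       (forall VB EB, block inc setT setT VB EB ->
          exists w, euler_tour inc VB EB w /\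
            (forall v, v \in VB -> separating inc setT setT v -> v \in anchors w)))).
Proof.
split; first by split; [exact: part1_fwd | exact: part1_bwd].
move=> C; split; [exact: part2_fwd | exact: part2_bwd].
Qed.

End Main.

Theorem theorem2p21 (V E : finType) (inc : E -> {set V})
  (HV : 0 < #|V|) (Hnoempty : forall e, inc e != set0) :
  (has_euler_family inc setT setT <->
     (forall VB EB, block inc setT setT VB EB -> has_euler_family inc VB EB))
  /\
  (connected inc setT setT ->
     (has_euler_tour inc setT setT <->
       (forall VB EB, block inc setT setT VB EB ->
          exists w, euler_tour inc VB EB w /\
            (forall v, v \in VB -> separating inc setT setT v -> v \in anchors w)))).
Proof. exact: (theorem2p21_sec Hnoempty HV). Qed.
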